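(* Let $p$ be an odd prime, $S$ a finite $p$-group and $\mathcal{F}$ a saturated fusion system on $S$. Let $E$ be an $\mathcal{F}$-essential subgroup of $S$ of rank $2$. If $E$ is not $\mathcal{F}$-characteristic in $N_S(E)$ and $\Phi(E)\le Z(E)$, then $E$ is an $\mathcal{F}$-pearl.
   Context: Rank of a finite group: minimal size of a generating set. For $P\le S$, $\mathrm{Aut}_{\mathcal{F}}(P)=\mathrm{Hom}_{\mathcal{F}}(P,P)$, $\mathrm{Out}_{\mathcal{F}}(P)=\mathrm{Aut}_{\mathcal{F}}(P)/\mathrm{Inn}(P)$, $P^{\mathcal{F}}=\{P\alpha:\alpha\in\mathrm{Hom}_{\mathcal{F}}(P,S)\}$. $E\le S$ is $\mathcal{F}$-essential if $C_S(P)\le P$ and $|N_S(E)|\ge|N_S(P)|$ for all $P\in E^{\mathcal{F}}$, and $\mathrm{Out}_{\mathcal{F}}(E)$ has a strongly $p$-embedded subgroup. For $Q\le P\le S$, $Q$ is $\mathcal{F}$-characteristic in $P$ if $Q$ is normalized by $\mathrm{Aut}_{\mathcal{F}}(P)$. An $\mathcal{F}$-pearl is an $\mathcal{F}$-essential subgroup that is either elementary abelian of order $p^2$ or non-abelian of order $p^3$. *)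

(* Defs.v *)
From mathcomp Require Import all_boot all_order all_fingroup all_solvable.
Set Implicit Arguments. Unset Strict Implicit. Unset Printing Implicit Defensive.
Import GroupScope.
Local Open Scope group_scope.

Section FusionDefs.
Variable gT : finGroupType.

(* A fusion system F on S is encoded by the predicate  F P f  meaning
   "f (restricted to P) is a morphism in Hom_F(P, S)". *)
Definition fusion_pred := {set gT} -> {ffun gT -> gT} -> bool.

Definition conjf (g : gT) : {ffun gT -> gT} := [ffun x => x ^ g].

Definition is_fusion_system (S : {set gT}) (F : fusion_pred) : Prop :=
  [/\
      (forall P f, F P f ->
         [/\ group_set P, P \subset S, {in P &, {morph f : x y / x * y}},
             {in P &, injective f} & f @: P \subset S]),
      (forall P (f g : {ffun gT -> gT}), F P f -> {in P, f =1 g} -> F P g),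
      (forall P : {group gT}, forall s, P \subset S -> s \in S -> F P (conjf s)),
      (forall P (Q : {group gT}) f, F P f -> Q \subset P -> F Q f) &
      (
      (forall P (f g : {ffun gT -> gT}), F P f -> F (f @: P) g -> F P [ffun x => g (f x)]) /\
      (forall P f, F P f -> exists g, F (f @: P) g /\ {in P, forall x, g (f x) = x}))].

Definition AutF (F : fusion_pred) (P : {set gT}) : {set {perm gT}} :=
  [set a in Aut P | F P [ffun x => a x]].

Definition AutS (S P : {set gT}) : {set {perm gT}} :=
  [set a in Aut P | [exists g in 'N_S(P), [forall x in P, a x == x ^ g]]].

Definition InnAut (P : {set gT}) : {set {perm gT}} :=
  [set a in Aut P | [exists g in P, [forall x in P, a x == x ^ g]]].

Definition OutF (F : fusion_pred) (P : {set gT}) := (AutF F P / InnAut P)%g.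

Definition fully_normalized (S : {set gT}) (F : fusion_pred) (P : {set gT}) :=
  forall f, F P f -> #|'N_S(f @: P)| <= #|'N_S(P)|.

Definition fully_centralized (S : {set gT}) (F : fusion_pred) (P : {set gT}) :=
  forall f, F P f -> #|'C_S(f @: P)| <= #|'C_S(P)|.

Definition N_phi (S P : {set gT}) (f : {ffun gT -> gT}) : {set gT} :=
  [set g in 'N_S(P) | [exists h in 'N_S(f @: P),
                         [forall y in P, f (y ^ g) == (f y) ^ h]]].

(* Saturation, in the form of [AKO, Definition I.2.2] *)
Definition saturated_fusion_system (p : nat) (S : {set gT}) (F : fusion_pred) :=
  is_fusion_system S F /\
  (forall P : {group gT}, P \subset S -> fully_normalized S F P ->
     fully_centralized S F P /\ p.-Sylow(AutF F P) (AutS S P)) /\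
  (forall (P : {group gT}) f, F P f -> fully_centralized S F (f @: P) ->
     exists f', F (N_phi S P f) f' /\ {in P, f' =1 f}).

End FusionDefs.

Definition has_strongly_p_embedded (p : nat) (rT : finGroupType) (G : {set rT}) :=
  exists H : {group rT},
    [/\ H \proper G, p %| #|H| &
        forall x, x \in G :\: H -> ~~ (p %| #|H :&: H :^ x|)].

Section FusionDefs2.
Variable gT : finGroupType.


Definition essential (p : nat) (S : {set gT}) (F : fusion_pred gT) (E : {group gT}) :=
  [/\ E \subset S,
      (forall f, F E f -> 'C_S(f @: E) \subset f @: E /\ #|'N_S(E)| >= #|'N_S(f @: E)|) &
      has_strongly_p_embedded p (OutF F E)].

Definition F_characteristic (F : fusion_pred gT) (Q P : {set gT}) :=
  forall a, a \in AutF F P -> [set a x | x in Q] = Q.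

Definition pearl (p : nat) (S : {set gT}) (F : fusion_pred gT) (E : {group gT}) :=
  essential p S F E /\
  ((p.-abelem E && (#|E| == p ^ 2)%N) || (~~ abelian E && (#|E| == p ^ 3)%N)).

End FusionDefs2.

(* Main.v *)
Require Import Defs.
From mathcomp Require Import all_boot all_order all_fingroup all_solvable.
Set Implicit Arguments. Unset Strict Implicit. Unset Printing Implicit Defensive.
Import GroupScope.
Local Open Scope group_scope.

Lemma strongly_emb_Op (rT : finGroupType) (p : nat) (G H Q : {group rT}) :
  prime p -> H \proper G -> p %| #|H| ->
  (forall x, x \in G :\: H -> ~~ (p %| #|H :&: H :^ x|)) ->
  Q <| G -> p.-group Q -> Q :=: 1.
Proof.
move=> pr_p prHG pH tiH nsQG pQ.
have [P sylP] := Sylow_exists p H.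
have pP := pHall_pgroup sylP.
have sPH := pHall_sub sylP.
have sHG := proper_sub prHG.
have pdP : p %| #|P|.
  rewrite (card_Hall sylP) p_part dvdn_exp //.
  by rewrite logn_gt0 mem_primes pr_p cardG_gt0.
have sylPG : p.-Sylow(G) P.
  have [R sylR sPR] := Sylow_superset (subset_trans sPH sHG) pP.
  have [eqPR | ltPR] := eqVproper sPR; first by rewrite eqPR.
  exfalso.
  have := nilpotent_proper_norm (pgroup_nil (pHall_pgroup sylR)) ltPR.
  case/properP=> _ [x /setIP[Rx Nx] notPx].
  case Hx: (x \in H).
    have sK : (P <*> <[x]>)%G \subset H by rewrite join_subG sPH cycle_subG Hx.
    have pK : p.-group (P <*> <[x]>)%G.
      apply: pgroupS (pHall_pgroup sylR).
      by rewrite join_subG (proper_sub ltPR) cycle_subG Rx.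
    have := sub_pHall sylP pK (joing_subl _ _) sK.
    move=> eqK; case/negP: notPx.
    have : x \in (P <*> <[x]>)%G by rewrite /= mem_gen // inE cycle_id orbT.
    by rewrite eqK.
  have GHx : x \in G :\: H.
    by rewrite inE Hx (subsetP (pHall_sub sylR)).
  have := tiH x GHx; apply/negP/negPn.
  apply: dvdn_trans pdP (cardSg _).
  by rewrite subsetI sPH -(normP Nx) conjSg.
have sQP : Q \subset P.
  exact: subset_trans (pcore_max pQ nsQG) (pcore_sub_Hall sylPG).
have [x /setDP[Gx notHx] ] : exists x, x \in G :\: H.
  by case/properP: prHG => _ [x Gx nHx]; exists x; rewrite inE nHx.
have GHx : x \in G :\: H by rewrite inE notHx Gx.
have [// | ntQ] := eqVneq (Q : {set rT}) 1; case/negP: (tiH x GHx).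
have [_ pdQ _] := pgroup_pdiv pQ ntQ.
apply: dvdn_trans pdQ (cardSg _).
rewrite subsetI (subset_trans sQP sPH) /=.
have nQx : x \in 'N(Q) := subsetP (normal_norm nsQG) x Gx.
by rewrite -(normP nQx) conjSg (subset_trans sQP sPH).
Qed.

Section Class2.
Variables (gT : finGroupType) (p : nat) (G : {group gT}).
Hypotheses (pr_p : prime p) (odd_p : odd p) (pG : p.-group G)
  (PhiZ : 'Phi(G) \subset 'Z(G)).

Lemma zcomm z x : z \in 'Z(G) -> x \in G -> commute x z.
Proof. by case/centerP=> _ cz Gx; apply: commute_sym; apply: cz. Qed.

Lemma der1_sub_Phi : G^`(1) \subset 'Phi(G).
Proof. by rewrite (Phi_joing pG) joing_subl. Qed.

Lemma Mho1_sub_Phi : 'Mho^1(G) \subset 'Phi(G).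
Proof. by rewrite (Phi_joing pG) joing_subr. Qed.

Lemma c2_comm_central x y : x \in G -> y \in G -> [~ x, y] \in 'Z(G).
Proof.
move=> Gx Gy; apply: (subsetP PhiZ); apply: (subsetP der1_sub_Phi).
exact: mem_commg.
Qed.

Lemma c2_pow_Phi x : x \in G -> x ^+ p \in 'Phi(G).
Proof.
move=> Gx; apply: (subsetP Mho1_sub_Phi).
have := @Mho_p_elt 1 _ G p x Gx (mem_p_elt pG Gx); by rewrite expn1.
Qed.

Lemma c2_commp x y : x \in G -> y \in G -> [~ x, y] ^+ p = 1.
Proof.
move=> Gx Gy.
have cy : commute y [~ x, y] := zcomm (c2_comm_central Gx Gy) Gy.
rewrite -commgX //; apply/eqP/commgP.
exact: zcomm (subsetP PhiZ _ (c2_pow_Phi Gy)) Gx.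
Qed.

Lemma c2_powM x y : x \in G -> y \in G -> (x * y) ^+ p = x ^+ p * y ^+ p.
Proof.
move=> Gx Gy.
have cx : commute x [~ y, x] := zcomm (c2_comm_central Gy Gx) Gx.
have cy : commute y [~ y, x] := zcomm (c2_comm_central Gy Gx) Gy.
rewrite (expMg_Rmul _ cy cx) bin2odd // expgM c2_commp // expg1n mulg1 //.
Qed.

End Class2.

Lemma morph_expg (gT : finGroupType) (W : {group gT}) (u : gT -> gT) x k :
  {in W &, {morph u : x y / x * y}} -> x \in W -> u (x ^+ k) = (u x) ^+ k.
Proof.
move=> uM Wx; elim: k => [|k IHk].
  have := uM 1 1 (group1 W) (group1 W); rewrite mulg1 => /esym.
  by move/(canRL (mulKg _)); rewrite mulVg.
by rewrite !expgS uM ?groupX // IHk.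
Qed.

Lemma p_elt_coprime_1 (gT : finGroupType) p q (d : gT) :
  prime p -> coprime p q -> p.-elt d -> d ^+ q = 1 -> d = 1.
Proof.
move=> pr_p cpq pd dq.
have /p_natP[k ok] := pd.
have : coprime #[d] q by rewrite ok coprimeXl.
have dvd : #[d] %| q by rewrite order_dvdn dq.
by rewrite /coprime (gcdn_idPl dvd) order_eq1 => /eqP.
Qed.

Lemma burn_abel (gT : finGroupType) p (W : {group gT}) (u : {perm gT}) (q : nat) :
  prime p -> p.-group W -> abelian W -> coprime p q -> u ^+ q = 1 ->
  {in W &, {morph u : x y / x * y}} -> (forall w, w \in W -> u w \in W) ->
  (forall w, w \in W -> w^-1 * u w \in 'Mho^1(W)) ->
  {in W, forall w, u w = w}.
Proof.
move=> pr_p; have [n] := ubnP #|W|; elim: n W => // n IHn W /ltnSE leWn.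
move=> pW cW cpq uq uM uW hf.
have [W1 | ntW] := eqVneq W 1%G.
  move=> w; rewrite W1 => /set1P ->.
  by have := @morph_expg _ W u 1 0 uM (group1 W).
pose W1 := 'Mho^1(W)%G.
have sW1 : W1 \subset W := Mho_sub 1 W.
have prW1 : W1 \proper W.
  apply: sub_proper_trans (Phi_proper ntW).
  by rewrite (Phi_joing pW) joing_subr.
have W1E : W1 :=: [set x ^+ p | x in W].
  by rewrite /= (MhoEabelian 1 pW cW) expn1.
have uW1 : forall w, w \in W1 -> u w \in W1.
  move=> w; rewrite W1E => /imsetP[x Wx ->].
  by rewrite (morph_expg _ uM Wx); apply: imset_f; apply: uW.
have fix1 : {in W1, forall w, u w = w}.
  apply: IHn => //.
  - exact: leq_trans (proper_card prW1) leWn.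
  - exact: pgroupS sW1 pW.
  - exact: abelianS sW1 cW.
  - by move=> x y /(subsetP sW1) Wx /(subsetP sW1) Wy; apply: uM.
  move=> w; rewrite {1}W1E => /imsetP[x Wx ->].
  rewrite (morph_expg _ uM Wx) -expgVn -expgMn.
    rewrite -[p]expn1; apply: Mho_p_elt; first exact: hf.
    apply: mem_p_elt (pgroupS sW1 pW) (hf x Wx).
  by apply: (centsP cW); rewrite ?groupV ?uW.
move=> w Ww.
pose d := w^-1 * u w.
have W1d : d \in W1 := hf w Ww.
have ud : u d = d := fix1 d W1d.
have uk : forall k, (u ^+ k) w = w * d ^+ k.
  elim=> [|k IHk]; first by rewrite perm1 mulg1.
  rewrite expgSr permM IHk uM ?Ww ?groupX ?(subsetP sW1 _ W1d) //.
  have uwd : u w = w * d by rewrite /= mulKVg.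
  rewrite (morph_expg _ uM (subsetP sW1 _ W1d)) ud uwd expgS; exact: esym (mulgA _ _ _).
have : d ^+ q = 1.
  by have := uk q; rewrite uq perm1 => /esym /(canRL (mulKg w)); rewrite mulVg.
move/(p_elt_coprime_1 pr_p cpq (mem_p_elt pW (subsetP sW1 _ W1d))).
by move=> d1; apply/esym; rewrite -[LHS]mulg1 -d1 mulKVg.
Qed.

Section Main.
Variables (gT : finGroupType) (p : nat) (S E : {group gT}) (F : fusion_pred gT).
Hypotheses (pr_p : prime p) (odd_p : odd p) (pS : p.-group S)
  (isF : is_fusion_system S F) (essE : essential p S F E)
  (PhiZ : 'Phi(E) \subset 'Z(E)).

Let ax2 : forall P (f g : {ffun gT -> gT}), F P f -> {in P, f =1 g} -> F P g.
Proof. by case: isF. Qed.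
Let ax3 : forall P : {group gT}, forall s, P \subset S -> s \in S -> F P (conjf s).
Proof. by case: isF. Qed.
Let ax5 : forall P (f g : {ffun gT -> gT}), F P f -> F (f @: P) g -> F P [ffun x => g (f x)].
Proof. by case: isF => _ _ _ _ []. Qed.

Let sES : E \subset S. Proof. by case: essE. Qed.
Let pE : p.-group E. Proof. exact: pgroupS sES pS. Qed.

Lemma ffun_imE (a : {perm gT}) : a \in Aut E -> [ffun x => a x] @: E = E.
Proof.
move=> Aa; rewrite -[RHS](im_perm_on (u := a)); last by case/setIdP: Aa.
by apply: eq_imset => x; rewrite ffunE.
Qed.

Lemma AutF_group_set : group_set (AutF F E).
Proof.
apply/group_setP; split.
  rewrite inE group1 /=; apply: (ax2 (ax3 sES (group1 S))) => x _.
  by rewrite !ffunE perm1 conjg1.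
move=> a b /setIdP[Aa Fa] /setIdP[Ab Fb]; rewrite inE groupM //=.
have := ax5 Fa; rewrite ffun_imE // => /(_ _ Fb) Fab.
by apply: ax2 Fab _ => x _; rewrite !ffunE permM.
Qed.

Definition AutFg := Group AutF_group_set.

Lemma InnAut_group_set : group_set (InnAut E).
Proof.
apply/group_setP; split.
  rewrite inE group1; apply/existsP; exists 1; rewrite group1 /=.
  by apply/forallP => x; rewrite perm1 conjg1 eqxx implybT.
move=> a b /setIdP[Aa /existsP[g /andP[Eg /forallP ag]]].
move=> /setIdP[Ab /existsP[h /andP[Eh /forallP bh]]].
rewrite inE groupM //=; apply/existsP; exists (g * h); rewrite groupM //=.
apply/forallP => x; apply/implyP => Ex; rewrite permM.
have /implyP/(_ Ex)/eqP -> := ag x.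
have /implyP/(_ (groupJ Ex Eg))/eqP -> := bh (x ^ g).
by rewrite conjgM.
Qed.

Definition Inng := Group InnAut_group_set.


Lemma conj_aut_Aut g : g \in 'N(E) -> conj_aut E g \in Aut E.
Proof.
by move=> nEg; apply: (subsetP (Aut_conj_aut E 'N(E))); apply: mem_morphim.
Qed.

Lemma conj_autA g : g \in 'N_S(E) -> conj_aut E g \in AutF F E.
Proof.
case/setIP=> Sg nEg; rewrite inE conj_aut_Aut //=.
by apply: (ax2 (ax3 sES Sg)) => x Ex; rewrite !ffunE norm_conj_autE.
Qed.

Lemma Inn_sub_A : InnAut E \subset AutF F E.
Proof.
apply/subsetP=> a /setIdP[Aa /existsP[g /andP[Eg /forallP ag]]].
rewrite inE Aa /=; apply: (ax2 (ax3 sES (subsetP sES g Eg))) => x Ex.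
by rewrite !ffunE; have /implyP/(_ Ex)/eqP -> := ag x.
Qed.

Lemma centric_E : 'C_S(E) \subset E.
Proof.
case: essE => _ /(_ (conjf 1)) cE _.
have [] := cE (ax3 sES (group1 S)).
suff -> : conjf 1 @: E = E by [].
rewrite -[RHS]imset_id; apply: eq_imset => x; by rewrite ffunE conjg1.
Qed.

Lemma conj_autI g : g \in 'N_S(E) -> conj_aut E g \in InnAut E -> g \in E.
Proof.
move=> NSg /setIdP[_ /existsP[e /andP[Ee /forallP eg]]].
have [Sg nEg] := setIP NSg.
have : g * e^-1 \in 'C_S(E).
  rewrite inE groupM ?groupV ?(subsetP sES e Ee) //=.
  apply/centP=> x Ex; apply: commute_sym; apply/commgP/conjg_fixP.
  have /implyP/(_ Ex)/eqP := eg x; rewrite norm_conj_autE // => exg.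
  by rewrite conjgM exg conjgK.
move/(subsetP centric_E) => Ege.
have Ee' : e^-1 \in E by rewrite groupV.
by rewrite -(groupMr _ Ee').
Qed.

Lemma A_norm_I : AutF F E \subset 'N(InnAut E).
Proof.
apply/subsetP=> a /setIdP[Aa _]; rewrite inE; apply/subsetP=> _ /imsetP[c Ic ->].
have [Ac /existsP[g /andP[Eg /forallP cg]]] := setIdP Ic.
rewrite inE groupJ //=; apply/existsP; exists (a g); rewrite Aut_closed //=.
apply/forallP=> x; apply/implyP=> Ex.
have Eax : a^-1 x \in E by rewrite Aut_closed ?groupV.
rewrite conjgE !permM.
have /implyP/(_ Eax)/eqP -> := cg (a^-1 x).
rewrite -(autmE Aa) morphJ //= autmE.
by rewrite -permM mulVg perm1.
Qed.

Lemma Aut_char (H G : {group gT}) a x : H \char G -> a \in Aut G -> x \in H -> a x \in H.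
Proof.
move=> chH Aa Hx; have sHG := char_sub chH.
have /charP[_ chf] := chH.
rewrite -(chf _ (injm_autm Aa) (im_autm Aa)) -(autmE Aa).
by apply: mem_morphim; rewrite // (subsetP sHG).
Qed.

Lemma normal_p_sub_I (U : {group {perm gT}}) :
  U <| AutFg -> p.-group U -> U \subset InnAut E.
Proof.
move=> nsUA pU.
case: essE => _ _ [H [prH pH tiH]].
have nIU : U \subset 'N(Inng) := subset_trans (normal_sub nsUA) A_norm_I.
have := @strongly_emb_Op _ p (AutFg / Inng)%G H (U / Inng)%G pr_p prH pH tiH.
move=> /(_ (quotient_normal _ nsUA) (quotient_pgroup _ pU)) U1.
by rewrite -(quotient_sub1 nIU) U1.
Qed.

Let cPhiE : {in 'Phi(E) & E, forall z x, commute x z}.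
Proof. by move=> z x Pz Ex; apply: zcomm (subsetP PhiZ z Pz) Ex. Qed.

Let Aut_morph a : a \in Aut E -> {in E &, {morph a : x y / x * y}}.
Proof. by move=> Aa; apply/morphicP; apply: Aut_morphic. Qed.

Let Aut_Phi a x : a \in Aut E -> x \in 'Phi(E) -> a x \in 'Phi(E).
Proof. by move=> Aa; apply: Aut_char (Phi_char E) Aa. Qed.

Let sPhiE : 'Phi(E) \subset E := Phi_sub E.

Lemma iter_fixed (u : {perm gT}) x d k : u \in Aut E -> x \in E -> d \in E ->
  u d = d -> u x = x * d -> (u ^+ k) x = x * d ^+ k.
Proof.
move=> Au Ex Ed ud uxd; elim: k => [|k IHk]; first by rewrite perm1 mulg1.
rewrite expgSr permM IHk (Aut_morph Au) ?groupX //.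
by rewrite (morph_expg _ (Aut_morph Au) Ed) ud uxd expgS; exact: esym (mulgA _ _ _).
Qed.

Lemma burnE (u : {perm gT}) q : u \in Aut E -> prime q -> q != p -> u ^+ q = 1 ->
  (forall x, x \in E -> x^-1 * u x \in 'Phi(E)) -> u = 1.
Proof.
move=> Au pr_q nqp uq hf.
have cpq : coprime p q by rewrite prime_coprime // dvdn_prime2 // eq_sym.
have uM := Aut_morph Au.
pose X := [set z in E | z^-1 * u z \in 'Mho^1('Phi(E))].
have gX : group_set X.
  apply/group_setP; split.
    by rewrite inE group1 invg1 mul1g (morph_expg 0 uM (group1 E)) group1.
  move=> z1 z2 /setIdP[Ez1 X1] /setIdP[Ez2 X2].
  have [f1 Pf1 uz1] : exists2 f, f \in 'Phi(E) & u z1 = z1 * f.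
    by exists (z1^-1 * u z1); rewrite ?mulKVg ?hf.
  rewrite uz1 mulKg in X1.
  rewrite inE groupM //= uM // uz1 invMg !mulgA mulgKV.
  rewrite (cPhiE Pf1 (groupVr Ez2)) -mulgA.
  by rewrite groupM.
have sPhiX : 'Phi(E) \subset Group gX.
  rewrite (Phi_joing pE) join_subG; apply/andP; split.
    rewrite derg1 /commutator gen_subG; apply/subsetP=> _ /imset2P[x y Ex Ey ->].
    rewrite inE groupR //=.
    have Pfx := hf x Ex; have Pfy := hf y Ey.
    have -> : u [~ x, y] = [~ x, y].
      rewrite -(autmE Au) morphR //= autmE.
      have [fx Pfx' ->] : exists2 f, f \in 'Phi(E) & u x = x * f.
        by exists (x^-1 * u x); rewrite ?mulKVg.
      have [fy Pfy' ->] : exists2 f, f \in 'Phi(E) & u y = y * f.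
        by exists (y^-1 * u y); rewrite ?mulKVg.
      clear Pfx Pfy; rename Pfx' into Pfx; rename Pfy' into Pfy.
      have cj : forall w f, w \in E -> f \in 'Phi(E) -> w ^ f = w.
        by move=> w f Ew Pf; apply/conjg_fixP/commgP; apply: cPhiE.
      have cm : forall w f, w \in E -> f \in 'Phi(E) -> [~ w, f] = 1.
        by move=> w f Ew Pf; apply/eqP/commgP; apply: cPhiE.
      have cm' : forall w f, w \in E -> f \in 'Phi(E) -> [~ f, w] = 1.
        move=> w f Ew Pf; apply/eqP/commgP; apply: commute_sym; exact: cPhiE.
      have Efx := subsetP sPhiE _ Pfx.
      rewrite commMgJ !commgMJ (cm x fy Ex Pfy) (cm' y fx Ey Pfx).
      rewrite (cm fx fy Efx Pfy) !mul1g conj1g mulg1.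
      by rewrite !cj ?groupR.
    by rewrite mulVg group1.
  rewrite (MhoE 1 pE) gen_subG; apply/subsetP=> _ /imsetP[x Ex ->].
  rewrite expn1 inE groupX //= (morph_expg _ uM Ex).
  rewrite -[u x](mulKVg x); set f := x^-1 * u x.
  have Pf := hf x Ex.
  rewrite expgMn; last exact: cPhiE Pf Ex.
  rewrite mulKg -[p]expn1; apply: Mho_p_elt => //.
  exact: mem_p_elt (pgroupS sPhiE pE) Pf.
have pPhi : p.-group 'Phi(E) := pgroupS sPhiE pE.
have cPhi : abelian 'Phi(E) := abelianS PhiZ (center_abelian E).
have fixPhi : {in 'Phi(E), forall w, u w = w}.
  apply: (burn_abel pr_p pPhi cPhi cpq uq).
  - by move=> a b /(subsetP sPhiE) Ea /(subsetP sPhiE) Eb; apply: uM.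
  - by move=> w; apply: Aut_Phi.
  by move=> w /(subsetP sPhiX) /setIdP[].
apply/permP=> x; rewrite perm1.
have [Ex | nEx] := boolP (x \in E); last exact: out_Aut Au nEx.
have Pd := hf x Ex.
have := iter_fixed q Au Ex (subsetP sPhiE _ Pd) (fixPhi _ Pd) (esym (mulKVg x (u x))).
rewrite uq perm1 => /esym /(canRL (mulKg x)); rewrite mulVg => d1.
have := p_elt_coprime_1 pr_p cpq (mem_p_elt pPhi Pd) d1.
by move/(canRL (mulKg x^-1)); rewrite invgK mulg1.
Qed.

Lemma stepi (u : {perm gT}) q (L : {group gT}) :
  u \in Aut E -> coprime p q -> u ^+ q = 1 -> L \subset E ->
  (forall x, x \in E -> x^-1 * u x \in L) ->
  (forall x, x \in L -> x^-1 * u x \in 'Phi(E)) ->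
  forall x, x \in E -> x^-1 * u x \in 'Phi(E).
Proof.
move=> Au cpq uq sLE hL hP x Ex.
have uM := Aut_morph Au.
have [l Ll uxl] : exists2 l, l \in L & u x = x * l.
  by exists (x^-1 * u x); rewrite ?mulKVg ?hL.
rewrite uxl mulKg.
have El := subsetP sLE l Ll.
have [f1 Pf1 ulf] : exists2 f, f \in 'Phi(E) & u l = l * f.
  by exists (l^-1 * u l); rewrite ?mulKVg ?hP.
have claim : forall k, (x * l ^+ k)^-1 * (u ^+ k) x \in 'Phi(E).
  elim=> [|k IHk]; first by rewrite perm1 mulg1 mulVg group1.
  have [f Pf yE] : exists2 f, f \in 'Phi(E) & (u ^+ k) x = x * l ^+ k * f.
    by exists ((x * l ^+ k)^-1 * (u ^+ k) x); rewrite ?mulKVg.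
  have Ef := subsetP sPhiE _ Pf.
  rewrite [u ^+ _.+1]expgSr permM yE.
  rewrite (uM _ _ (groupM Ex (groupX k El)) Ef) (uM _ _ Ex (groupX k El)) uxl.
  rewrite (morph_expg _ uM El) ulf expgMn; last exact: cPhiE Pf1 El.
  have -> : x * l * (l ^+ k * f1 ^+ k) * u f = (x * l ^+ k.+1) * (f1 ^+ k * u f).
    by rewrite expgS !mulgA.
  by rewrite mulKg groupM ?groupX ?Aut_Phi.
have := claim q; rewrite uq perm1 invMg mulgKV groupV => Plq.
have Plp : l ^+ p \in 'Phi(E) := c2_pow_Phi pE El.
have nPl : l \in 'N('Phi(E)) := subsetP (normal_norm (Phi_normal E)) l El.
apply: coset_idr => //.
have cl1 : forall m, l ^+ m \in 'Phi(E) -> coset 'Phi(E) l ^+ m = 1.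
  by move=> m Pm; rewrite -morphX //; apply: coset_id.
apply: (p_elt_coprime_1 pr_p cpq) (cl1 q Plq).
apply: pnat_dvd (pnat_id pr_p).
by rewrite order_dvdn cl1.
Qed.

Definition UL (L : {set gT}) := [set a in AutF F E |
  [forall x in E, x^-1 * a x \in L] && [forall x in L, x^-1 * a x \in 'Phi(E)]].

Lemma comp_rel (u v : {perm gT}) (X Y : {group gT}) :
  X \subset E -> Y \subset E -> u \in Aut E -> v \in Aut E ->
  (forall x, x \in X -> x^-1 * u x \in Y) -> (forall x, x \in X -> x^-1 * v x \in Y) ->
  (forall y, y \in Y -> v y \in Y) ->
  forall x, x \in X -> x^-1 * (u * v) x \in Y.
Proof.
move=> sXE sYE Au Av hu hv vY x Xx.
have [l Yl uxl] : exists2 l, l \in Y & u x = x * l.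
  by exists (x^-1 * u x); rewrite ?mulKVg ?hu.
have [l' Yl' vxl] : exists2 l, l \in Y & v x = x * l.
  by exists (x^-1 * v x); rewrite ?mulKVg ?hv.
rewrite permM uxl (Aut_morph Av (subsetP sXE x Xx) (subsetP sYE l Yl)) vxl.
by rewrite -mulgA mulKg groupM ?vY.
Qed.

Lemma conj_rel (u b : {perm gT}) (X Y : {group gT}) :
  X \subset E -> Y \subset E -> u \in Aut E -> b \in Aut E ->
  (forall x, x \in X -> b^-1 x \in X) -> (forall y, y \in Y -> b y \in Y) ->
  (forall x, x \in X -> x^-1 * u x \in Y) ->
  forall x, x \in X -> x^-1 * (u ^ b) x \in Y.
Proof.
move=> sXE sYE Au Ab bX bY hu x Xx.
have Xy := bX x Xx.
have [l Yl uyl] : exists2 l, l \in Y & u (b^-1 x) = b^-1 x * l.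
  by exists ((b^-1 x)^-1 * u (b^-1 x)); rewrite ?mulKVg ?hu.
rewrite conjgE !permM uyl (Aut_morph Ab (subsetP sXE _ Xy) (subsetP sYE l Yl)).
by rewrite -permM mulVg perm1 mulKg bY.
Qed.

Lemma UL_sub_I (L : {group gT}) : 'Phi(E) \subset L -> L \subset E ->
  (forall a x, a \in AutF F E -> x \in L -> a x \in L) -> UL L \subset InnAut E.
Proof.
move=> sPL sLE LA.
have AA : forall a, a \in AutF F E -> a \in Aut E by move=> a /setIdP[].
have gU : group_set (UL L).
  apply/group_setP; split.
    rewrite inE (group1 AutFg) /=; apply/andP; split; apply/forallP=> x;
    by apply/implyP=> _; rewrite perm1 mulVg group1.
  move=> u v /setIdP[Au /andP[/forall_inP hu1 /forall_inP hu2]].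
  move=> /setIdP[Av /andP[/forall_inP hv1 /forall_inP hv2]].
  have AM : u * v \in AutF F E by apply: (@groupM _ AutFg).
  rewrite inE AM /=; apply/andP; split; apply/forall_inP.
    apply: (comp_rel (subxx E) sLE) => //; try exact: AA.
    by move=> y; apply: LA.
  apply: (comp_rel sLE sPhiE) => //; try exact: AA.
  by move=> y; apply: Aut_Phi; apply: AA.
have nsU : Group gU <| AutFg.
  rewrite /normal; apply/andP; split.
    by apply/subsetP=> a /setIdP[].
  apply/subsetP=> b Ab; rewrite inE; apply/subsetP=> _ /imsetP[u Uu ->].
  have [Au /andP[/forall_inP hu1 /forall_inP hu2]] := setIdP Uu.
  have Ab' : b^-1 \in AutF F E by rewrite (@groupV _ AutFg).
  have AJ : u ^ b \in AutF F E by apply: (@groupJ _ AutFg).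
  rewrite inE AJ /=; apply/andP; split; apply/forall_inP.
    apply: (conj_rel (subxx E) sLE) => //; try exact: AA.
    - by move=> x; apply: Aut_closed; apply: AA.
    - by move=> y; apply: LA.
  apply: (conj_rel sLE sPhiE) => //; try exact: AA.
  - by move=> x; apply: LA.
  - by move=> y; apply: Aut_Phi; apply: AA.
have pU : p.-group (Group gU).
  apply/pgroupP=> q pr_q qd.
  have [u Uu ou] := Cauchy pr_q qd.
  have [-> | nqp] := eqVneq q p; first by rewrite inE.
  exfalso.
  have [Au /andP[/forall_inP hu1 /forall_inP hu2]] := setIdP Uu.
  have Au' := AA _ Au.
  have uq : u ^+ q = 1 by rewrite -ou expg_order.
  have cpq : coprime p q by rewrite prime_coprime // dvdn_prime2 // eq_sym.
  have hf := stepi Au' cpq uq sLE hu1 hu2.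
  have u1 := burnE Au' pr_q nqp uq hf.
  by move: ou pr_q; rewrite u1 order1 => <-.
exact: normal_p_sub_I nsU pU.
Qed.

Local Notation T := 'N_S(E).

Let nsET : E <| T := normalSG sES.
Let sET : E \subset T := normal_sub nsET.
Let pT : p.-group T := pgroupS (subsetIl _ _) pS.

Lemma conjA_rel g (L : {set gT}) x : g \in T -> x \in E ->
  x^-1 * conj_aut E g x = [~ x, g].
Proof. by case/setIP=> _ nEg Ex; rewrite norm_conj_autE. Qed.

Lemma R2 g : g \in T -> (forall x, x \in E -> [~ x, g] \in 'Phi(E)) -> g \in E.
Proof.
move=> Tg hg; apply: conj_autI => //.
apply: (subsetP (UL_sub_I (subxx _) sPhiE _)).
  by move=> a x /setIdP[Aa _]; apply: Aut_Phi.
rewrite inE conj_autA //=; apply/andP; split; apply/forall_inP=> x Ex.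
  by rewrite (conjA_rel 'Phi(E)) ?hg.
by rewrite (conjA_rel 'Phi(E)) ?hg ?(subsetP sPhiE).
Qed.

Lemma central_prime_quo (L M : {group gT}) : M \subset L -> L \subset E ->
  M <| T -> L <| T -> #|L : M| = p -> [~: L, T] \subset M.
Proof.
move=> sML sLE nsMT nsLT iLM.
have nMT := normal_norm nsMT.
have nML : L \subset 'N(M) := subset_trans (normal_sub nsLT) nMT.
rewrite -quotient_cents2 //.
have nsq : L / M <| T / M := quotient_normal _ nsLT.
have cardq : #|L / M| = p by rewrite card_quotient.
have ntq : L / M != 1.
  apply/eqP=> q1; move: cardq; rewrite q1 cards1 => p1.
  by have := pr_p; rewrite -p1.
have := meet_center_nil (pgroup_nil (quotient_pgroup _ pT)) nsq ntq.
have prq : prime #|L / M| by rewrite cardq.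
move/(prime_meetG prq) => sZ.
exact: subset_trans sZ (subsetIr _ _).
Qed.

Lemma prime_sq_split (a b : nat) : (a * b)%N = (p ^ 2)%N -> a != 1%N -> b != 1%N -> a = p /\ b = p.
Proof.
move=> ab na nb.
have : (a %| p ^ 2)%N by rewrite -ab dvdn_mulr.
case/(dvdn_pfactor _ _ pr_p)=> m; case: m => [|[|[|m]]] //= _ am.
- by rewrite am in na.
- move: ab; rewrite am expn1 (expnS p 1) expn1 => /eqP.
  by rewrite eqn_pmul2l ?prime_gt0 // => /eqP.
- move: ab; rewrite am -{2}(muln1 (p ^ 2)%N) => /eqP.
  by rewrite eqn_pmul2l ?expn_gt0 ?prime_gt0 // => /eqP bb; rewrite bb in nb.
Qed.

Lemma IRR (L : {group gT}) : #|E : 'Phi(E)| = (p ^ 2)%N -> 'Phi(E) \subset L ->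
  L \subset E -> (forall a x, a \in AutF F E -> x \in L -> a x \in L) ->
  L != 'Phi(E) :> {set gT} -> L != E :> {set gT} -> T \subset E.
Proof.
move=> iEP sPL sLE LA nLP nLE.
have nLT : T \subset 'N(L).
  apply/subsetP=> g Tg; rewrite inE; apply/subsetP=> _ /imsetP[x Lx ->].
  have [_ nEg] := setIP Tg.
  rewrite -(norm_conj_autE nEg (subsetP sLE x Lx)).
  by apply: LA => //; apply: conj_autA.
have nsLT : L <| T by rewrite /normal (subset_trans sLE sET) nLT.
have nsPT : 'Phi(E) <| T.
  by rewrite /normal (subset_trans sPhiE sET) (char_norm_trans (Phi_char E) (normal_norm nsET)).
have [iEL iLP] : #|E : L| = p /\ #|L : 'Phi(E)| = p.
  apply: prime_sq_split; first by rewrite (Lagrange_index sLE sPL).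
    by rewrite indexg_eq1; apply: contra nLE => sEL; rewrite eqEsubset sLE.
  by rewrite indexg_eq1; apply: contra nLP => sLP; rewrite eqEsubset sLP.
have cET := central_prime_quo sLE (subxx E) nsLT nsET iEL.
have cLT := central_prime_quo sPL sLE nsPT nsLT iLP.
apply/subsetP=> g Tg; apply: conj_autI => //.
apply: (subsetP (UL_sub_I sPL sLE LA)).
rewrite inE conj_autA //=; apply/andP; split; apply/forall_inP=> x Ex.
  by rewrite (conjA_rel L) // (subsetP cET) ?mem_commg.
by rewrite (conjA_rel L) ?(subsetP sLE) // (subsetP cLT) ?mem_commg.
Qed.

Lemma rankE : 'm(E) = 2 -> #|E : 'Phi(E)| = (p ^ 2)%N.
Proof.
move=> mE.
have nPE : E \subset 'N('Phi(E)) := normal_norm (Phi_normal E).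
have abQ := Phi_quotient_abelem pE.
have pQ : p.-group (E / 'Phi(E)) := abelem_pgroup abQ.
have : 'm(E / 'Phi(E)) <= 2 by rewrite -mE quotient_grank.
rewrite grank_abelian ?(abelem_abelian abQ) // (rank_abelem abQ).
rewrite -card_quotient //.
have cQ := card_pgroup pQ.
move: cQ; set n := logn p _ => cQ.
rewrite cQ.
case: n cQ => [|[|[|k]]] //= cQ _.
- have : cyclic (E / 'Phi(E)).
    move: cQ; rewrite expn0 => /card1_trivg ->; exact: cyclic1.
  move/Phi_quotient_cyclic/cyclicP=> [x defE].
  have := grank_min [set x]; rewrite cards1 -/(cycle x) -defE mE //.
- have : cyclic (E / 'Phi(E)) by apply: prime_cyclic; rewrite cQ expn1.
  move/Phi_quotient_cyclic/cyclicP=> [x defE].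
  have := grank_min [set x]; rewrite cards1 -/(cycle x) -defE mE //.
Qed.

Lemma E_der_Phi : 'm(E) = 2 -> ~ F_characteristic F E T -> E^`(1) = 'Phi(E).
Proof.
move=> mE nchar.
have iEP := rankE mE.
have [al Aal nE] : exists2 a, a \in AutF F T & [set a x | x in E] != E.
  case: (boolP [exists a in AutF F T, [set a x | x in E] != E]).
    by case/exists_inP=> a Aa ne; exists a.
  move/exists_inPn=> hall; exfalso; apply: nchar => a Aa.
  by apply/eqP; have := hall a Aa; rewrite negbK.
have Aal' : al \in Aut T by case/setIdP: Aal.
pose f := autm Aal'.
pose E2 := (f @* E)%G.
have E2E : E2 :=: [set al x | x in E] by rewrite /= morphimEsub.
have nsE2 : E2 <| T.
  by have := morphim_normal f nsET; rewrite im_autm.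
have PhiZ2 : 'Phi(E2) \subset 'Z(E2).
  rewrite /= -(injm_Phi (injm_autm Aal') sET) -(injm_center (injm_autm Aal') sET).
  exact: morphimS.
have pE2 : p.-group E2 := pgroupS (normal_sub nsE2) pT.
have cardE2 : #|E2| = #|E| by rewrite card_injm ?injm_autm.
have [t0 E2t0 nEt0] : exists2 t, t \in E2 & t \notin E.
  apply/subsetPn; apply: contra nE => sE2E.
  by rewrite -E2E eqEcard sE2E cardE2 leqnn.
have [k ok] := p_natP (mem_p_elt pE2 E2t0).
have exP : exists n, t0 ^+ (p ^ n) \in E by exists k; rewrite -ok expg_order group1.
case: (ex_minnP exP) => m Pm minm.
have m0 : m != 0%N by apply: contraNneq nEt0 => m0; rewrite m0 expn0 expg1 in Pm.
pose t := t0 ^+ (p ^ m.-1).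
have E2t : t \in E2 by rewrite groupX.
have nEt : t \notin E.
  apply/negP=> Et; have := minm _ Et; rewrite leqNgt.
  by case: m m0 {Pm minm t E2t Et} => //= m' _; rewrite ltnSn.
have Etp : t ^+ p \in E by rewrite /t -expgM -expnSr prednK // lt0n.
have Tt : t \in T := subsetP (normal_sub nsE2) t E2t.
have [e Ee ncomm] : exists2 e, e \in E & [~ e, t] \notin 'Phi(E).
  case: (boolP [exists e in E, [~ e, t] \notin 'Phi(E)]).
    by case/exists_inP=> e Ee ne; exists e.
  move/exists_inPn=> hall; exfalso; case/negP: nEt; apply: R2 => // x Ex.
  by have := hall x Ex; rewrite negbK.
pose c := [~ e, t].
have Te : e \in T := subsetP sET e Ee.
have Ec : c \in E.
  rewrite /c /commg groupM ?groupV // memJ_norm //.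
  by case/setIP: Tt.
have E2te : [~ t, e] \in E2.
  rewrite /commg groupM ?groupV // memJ_norm //.
  exact: subsetP (normal_norm nsE2) e Te.
have key : [~ t, e] ^+ p = [~ t ^+ p, e].
  have h : (t ^+ p) ^ e = t ^+ p * [~ t, e] ^+ p.
    by rewrite conjXg conjg_mulR (c2_powM odd_p pE2 PhiZ2).
  by rewrite [RHS]/commg h mulKg.
have E'cp : c ^+ p \in E^`(1).
  rewrite /c -invgR expgVn key groupV.
  exact: mem_commg.
pose M := (E^`(1) <*> 'Mho^1('Phi(E)))%G.
have chM : M \char E.
  apply: charY; first exact: der_char.
  exact: char_trans (Mho_char 1 _) (Phi_char E).
have gL : group_set [set x in E | x ^+ p \in M].
  apply/group_setP; split; first by rewrite inE group1 expg1n group1.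
  move=> x y /setIdP[Ex Mx] /setIdP[Ey My].
  by rewrite inE groupM //= (c2_powM odd_p pE PhiZ Ex Ey) groupM.
pose L := Group gL.
have sLE : L \subset E by apply/subsetP=> x /setIdP[].
have pPhi : p.-group 'Phi(E) := pgroupS sPhiE pE.
have sPL : 'Phi(E) \subset L.
  apply/subsetP=> z Pz; rewrite inE (subsetP sPhiE) //=.
  apply: (subsetP (joing_subr _ _)).
  by have := @Mho_p_elt 1 _ 'Phi(E) p z Pz (mem_p_elt pPhi Pz); rewrite expn1.
have LA : forall a x, a \in AutF F E -> x \in L -> a x \in L.
  move=> a x /setIdP[Aa _] /setIdP[Ex Mx].
  rewrite inE Aut_closed //= -(morph_expg _ (Aut_morph Aa) Ex).
  exact: Aut_char chM Aa Mx.
have Lc : c \in L by rewrite inE Ec (subsetP (joing_subl _ _)).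
have nLP : L != 'Phi(E) :> {set gT}.
  by apply: contraNneq ncomm => LP; rewrite -/c -LP.
have LE : L :=: E.
  apply/eqP; apply: contraR nE => nLE.
  have sTE := IRR iEP sPL sLE LA nLP nLE.
  have TE : T = E by apply/eqP; rewrite eqEsubset sTE sET.
  have h : f @* E = f @* T := congr1 (fun X => f @* X) (esym TE).
  by rewrite -E2E /= h im_autm; apply/eqP.
have sMhoM : 'Mho^1(E) \subset M.
  rewrite (MhoE 1 pE) gen_subG; apply/subsetP=> _ /imsetP[x Ex ->].
  by rewrite expn1; have := Ex; rewrite -{1}LE => /setIdP[].
have sPM : 'Phi(E) \subset M.
  by rewrite (Phi_joing pE) join_subG joing_subl sMhoM.
have cPhi : abelian 'Phi(E) := abelianS PhiZ (center_abelian E).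
have defPhi : 'Phi('Phi(E)) <*> E^`(1) = 'Phi(E).
  apply/eqP; rewrite eqEsubset join_subG Phi_sub (der1_sub_Phi pE) /=.
  by rewrite joingC (Phi_Mho pPhi cPhi).
by have := Phi_nongen defPhi; rewrite genGid.
Qed.

Lemma pearl_main : 'm(E) = 2 -> ~ F_characteristic F E T -> pearl p S F E.
Proof.
move=> mE nchar; split=> //.
have iEP := rankE mE.
have der := E_der_Phi mE nchar.
have [B defB cB] := grank_witness E.
rewrite mE in cB; have /cards2P[x [y [_ Bxy]]] : #|B| == 2 by rewrite cB.
have Ex : x \in E by rewrite -defB mem_gen // Bxy set21.
have Ey : y \in E by rewrite -defB mem_gen // Bxy set22.
have defJ : <[x]> <*> <[y]> = E.
  apply/eqP; rewrite eqEsubset join_subG !cycle_subG Ex Ey /=.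
  rewrite -defB gen_subG Bxy; apply/subsetP=> z /set2P[->|->];
  by rewrite mem_gen // inE cycle_id ?orbT.
have cxy : [~ x, y] \in 'C(<[x]> <*> <[y]>).
  rewrite defJ; have := c2_comm_central pE PhiZ Ex Ey.
  by case/setIP.
have dE := der1_joing_cycles cxy; rewrite defJ in dE.
have oxy : (#[[~ x, y]] %| p)%N by rewrite order_dvdn (c2_commp pE PhiZ Ex Ey).
have cardE : #|E| = (p ^ 2 * #|E^`(1)|)%N.
  by rewrite der -iEP mulnC Lagrange ?Phi_sub.
have cardD : #|E^`(1)| = #[[~ x, y]] by rewrite dE.
have [o1 | op] : #[[~ x, y]] = 1%N \/ #[[~ x, y]] = p.
  by have /orP[/eqP -> | /eqP ->] := (primeP pr_p).2 _ oxy; [left | right].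
- apply/orP; left; apply/andP; split.
    rewrite -(trivg_Phi pE) -der; apply/eqP/card1_trivg; by rewrite cardD.
  by rewrite cardE cardD o1 muln1.
- apply/orP; right; apply/andP; split.
    apply/negP=> /derG1P D1; move: cardD; rewrite D1 cards1 op => p1.
    by have := pr_p; rewrite -p1.
  by rewrite cardE cardD op -expnSr.
Qed.

End Main.

Unset Implicit Arguments.

Theorem theorem1p12 (gT : finGroupType) (p : nat) (S E : {group gT})
    (F : fusion_pred gT) :
  prime p -> odd p -> p.-group S ->
  saturated_fusion_system p S F ->
  essential p S F E ->
  'm(E) = 2 (* rank: minimal size of a generating set *) ->
  ~ F_characteristic F E 'N_S(E) ->
  'Phi(E) \subset 'Z(E) ->
  pearl p S F E.
Proof.
move=> pr_p odd_p pS [isF _] essE mE nchar PhiZ.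
exact: pearl_main.
Qed.
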